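(* Let $n$ be such that $n$ or $1/n$ is a positive integer, let $\Delta_n=\mathrm{diag}(n,\frac1n,1,\dots,1)\in\mathcal{M}_{2g}(\mathbb{Q})$, and let $V$, $W$ be Seifert matrices with $W=\Delta_nV\Delta_n$. Then there are enlargements $\tilde V$ of $V$ and $\tilde W$ of $W$ with $\tilde W=P\tilde VP^t$ for some integral symplectic matrix $P$. Furthermore, if $(M,K,\Sigma,\underline f,V)$ and $(M',K',\Sigma',\underline f',W)$ are $\mathbb{Q}$SK-systems, then $W$ can be obtained from $V$ by a sequence of one enlargement, one integral symplectic congruence and one reduction, which induces the same $\tau$-class of isomorphisms $\mathcal{A}(K)\to\mathcal{A}(K')$ as the congruence $W=\Delta_nV\Delta_n$.
   Context: $J$: $2g\times2g$ block-diagonal with blocks $\begin{pmatrix}0&-1\\1&0\end{pmatrix}$. Seifert matrix: $V\in\mathcal{M}_{2g}(\mathbb{Q})$ with $V-V^t=J$ (note $\Delta_n$ is symplectic). $P$ symplectic: $PJP^t=J$. Row enlargement of $V$: $\begin{pmatrix}0&0&0\\1&x&\rho^t\\0&\rho&V\end{pmatrix}$; column enlargement: $\begin{pmatrix}0&-1&0\\0&x&\rho^t\\0&\rho&V\end{pmatrix}$ ($x\in\mathbb{Q}$, $\rho\in\mathbb{Q}^{2g}$); $V$ is a reduction of these. $\mathbb{Q}$SK-system $(M,K,\Sigma,\underline f,V)$: a rational homology 3-sphere $M$, knot $K$ trivial in $H_1(M;\mathbb{Z})$, Seifert surface $\Sigma$ of genus $g$, basis $(f_i)$ of $H_1(\Sigma;\mathbb{Z})$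 with intersection matrix $-J$, $V_{ij}=lk(f_i,f_j^+)$. $\mathcal{A}(K)=H_1(\tilde X;\mathbb{Q})$ for the infinite cyclic covering $\tilde X$ of the exterior, $t$ acting by a deck generator. Associated generators $(b_i)$: lifts of meridians of the $f_i$, generating $\mathcal{A}(K)$ with relations $\sum_i(tV-V^t)_{ij}b_i$, defined up to a common factor $t^k$. Induced $\tau$-class (the $\tau$-class of $\xi$ is $\{\xi\circ m_k\}$, $m_k$ multiplication by $t^k$): for a congruence $V'=PVP^t$, the class of $b_i\mapsto\sum_kP_{ki}b'_k$; for an enlargement, the class of $b_i\mapsto b'_{i+2}$ (generators of the enlarged matrix indexed $1,\dots,2g+2$); reductions give inverses; sequences give compositions. Here the intermediate enlarged matrices define modules by the same presentation. *)

(* Defs.v *)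
From HB Require Import structures.
From mathcomp Require Import all_boot all_order all_algebra.
Set Implicit Arguments. Unset Strict Implicit. Unset Printing Implicit Defensive.
Import Order.TTheory GRing.Theory Num.Theory.
Local Open Scope ring_scope.

(* J : 2g x 2g block diagonal with blocks [[0,-1],[1,0]] (0-indexed). *)
Definition Jmx (g : nat) : 'M[rat]_(g.*2) :=
  \matrix_(i, j)
    if ~~ odd i && (j == i.+1 :> nat) then -1
    else if odd i && (j.+1 == i :> nat) then 1 else 0.

Definition seifert (g : nat) (V : 'M[rat]_(g.*2)) : Prop := V - V^T = Jmx g.

Definition symplectic (g : nat) (P : 'M[rat]_(g.*2)) : Prop :=
  P *m Jmx g *m P^T = Jmx g.

Definition integral_mx (m n : nat) (P : 'M[rat]_(m, n)) : Prop :=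
  forall i j, P i j \is a Num.int.

Definition Delta (g : nat) (n : rat) : 'M[rat]_(g.*2) :=
  \matrix_(i, j)
    if i == j then (if (i == 0%N :> nat) then n
                    else if (i == 1%N :> nat) then n^-1 else 1)
    else 0.

(* Row enlargement  [[0,0,0],[1,x,rho^t],[0,rho,V]]. *)
Definition row_enl (g : nat) (V : 'M[rat]_(g.*2)) (x : rat) (rho : 'cV[rat]_(g.*2))
  : 'M[rat]_((g.+1).*2) :=
  block_mx (\matrix_(i < 2, j < 2)
              if (i == 1%N :> nat) && (j == 0%N :> nat) then 1
              else if (i == 1%N :> nat) && (j == 1%N :> nat) then x else 0)
           (col_mx (0 : 'rV[rat]_(g.*2)) rho^T)
           (row_mx (0 : 'cV[rat]_(g.*2)) rho)
           V.

(* Column enlargement  [[0,-1,0],[0,x,rho^t],[0,rho,V]]. *)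
Definition col_enl (g : nat) (V : 'M[rat]_(g.*2)) (x : rat) (rho : 'cV[rat]_(g.*2))
  : 'M[rat]_((g.+1).*2) :=
  block_mx (\matrix_(i < 2, j < 2)
              if (i == 0%N :> nat) && (j == 1%N :> nat) then -1
              else if (i == 1%N :> nat) && (j == 1%N :> nat) then x else 0)
           (col_mx (0 : 'rV[rat]_(g.*2)) rho^T)
           (row_mx (0 : 'cV[rat]_(g.*2)) rho)
           V.

(* Vt is an enlargement of V (equivalently, V is a reduction of Vt). *)
Definition enlargement (g : nat) (V : 'M[rat]_(g.*2)) (Vt : 'M[rat]_((g.+1).*2)) : Prop :=
  exists (x : rat) (rho : 'cV[rat]_(g.*2)), Vt = row_enl V x rho \/ Vt = col_enl V x rho.

(* Relation matrix tV - V^t over Q[t]; relation j is sum_i (tV - V^t)_{ij} b_i,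
   i.e. (as a coordinate row vector in the generators) row j of (tV - V^t)^T. *)
Definition alex_rel (m : nat) (V : 'M[rat]_m) : 'M[{poly rat}]_m :=
  'X *: map_mx polyC V - map_mx polyC V^T.

(* Equality in the module A(V) = Q[t,t^-1]^m / (relations) of two elements
   given by coordinate row vectors (w.r.t. the generators b_1..b_m) with
   coefficients in Q[t]:  x = y in A(V) iff t^N (x - y) is a Q[t]-combination
   of relations for some N (clearing denominators t^k of Laurent coefficients). *)
Definition alex_eq (m : nat) (V : 'M[rat]_m) (x y : 'rV[{poly rat}]_m) : Prop :=
  exists (N : nat) (c : 'rV[{poly rat}]_m), 'X^N *: (x - y) = c *m (alex_rel V)^T.

(* Main.v *)
Require Import Defs.
From HB Require Import structures.
From mathcomp Require Import all_boot all_order all_algebra.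
From mathcomp Require Import ring.
Set Implicit Arguments. Unset Strict Implicit. Unset Printing Implicit Defensive.
Import Order.TTheory GRing.Theory Num.Theory.
Local Open Scope ring_scope.

Section Q.
Variables (R : comNzRingType) (m : nat).
Implicit Types (M : 'M[R]_m) (u v w : 'rV[R]_m).
Definition Q M u v := (u *m M *m v^T) 0 0.
Definition ev (a : 'I_m) : 'rV[R]_m := delta_mx 0 a.

Lemma QE (A B M : 'M[R]_m) i j : (A *m M *m B^T) i j = Q M (row i A) (row j B).
Proof.
have -> : (A *m M *m B^T) i j = (row i (A *m M *m B^T)) 0 j by rewrite [RHS]mxE.
rewrite !row_mul /Q [LHS]mxE [RHS]mxE; apply: eq_bigr => k _; by rewrite !mxE. Qed.
Lemma QDl M u v w : Q M (u + v) w = Q M u w + Q M v w.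
Proof. by rewrite /Q !mulmxDl mxE. Qed.
Lemma QDr M u v w : Q M w (u + v) = Q M w u + Q M w v.
Proof. by rewrite /Q linearD /= mulmxDr mxE. Qed.
Lemma QZl M a u w : Q M (a *: u) w = a * Q M u w.
Proof. by rewrite /Q -!scalemxAl mxE. Qed.
Lemma QZr M a u w : Q M w (a *: u) = a * Q M w u.
Proof. by rewrite /Q linearZ /= -scalemxAr mxE. Qed.
Lemma QNl M u w : Q M (- u) w = - Q M u w.
Proof. by rewrite -scaleN1r QZl mulN1r. Qed.
Lemma QNr M u w : Q M w (- u) = - Q M w u.
Proof. by rewrite -scaleN1r QZr mulN1r. Qed.
Lemma QBl M u v w : Q M (u - v) w = Q M u w - Q M v w.
Proof. by rewrite QDl QNl. Qed.
Lemma QBr M u v w : Q M w (u - v) = Q M w u - Q M w v.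
Proof. by rewrite QDr QNr. Qed.
Lemma Qev M a b : Q M (ev a) (ev b) = M a b.
Proof. by rewrite /Q /ev -rowE trmx_delta -colE !mxE. Qed.
Lemma entryQ u c : u 0 c = Q 1%:M u (ev c).
Proof. by rewrite /Q mulmx1 /ev trmx_delta -colE mxE. Qed.
Lemma Q1ev a b : Q 1%:M (ev a) (ev b) = (a == b)%:R.
Proof. by rewrite Qev mxE. Qed.
End Q.

Arguments ev {R m} a.
Section Idx.
Variable g : nat.
Local Notation m := ((g.+1).*2).
Local Notation N := ((g.+2).*2).
Definition j0 : 'I_m := @ord0 (g.*2).+1.
Definition j1 : 'I_m := @Ordinal (g.*2).+2 1 isT.
Definition XX (b : 'I_m) : 'I_N := rshift 2 b.
Definition E0 : 'I_N := lshift m (@ord0 1).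
Definition E1 : 'I_N := lshift m (@ord_max 1).
Definition F0 : 'I_N := XX j0.
Definition F1 : 'I_N := XX j1.

Definition gen (b : 'I_m) : bool := (b != j0) && (b != j1).

Variant bigidx (i : 'I_N) : Type :=
 | IE0 of i = E0 | IE1 of i = E1 | IF0 of i = F0 | IF1 of i = F1
 | IX b of i = XX b & gen b.

Lemma bigidxP i : bigidx i.
Proof.
case: (split_ordP (i : 'I_(2 + m))) => [a ->|b ->].
  case: a => [[|[|a]] ha] //.
  - by apply: IE0; apply/val_inj.
  - by apply: IE1; apply/val_inj.
case: (eqVneq b j0) => [->|h0]; first exact: IF0.
case: (eqVneq b j1) => [->|h1]; first exact: IF1.
by apply: (@IX _ b erefl); rewrite /gen h0 h1.
Qed.

Lemma XXeq a b : (XX a == XX b) = (a == b). Proof. by rewrite [LHS]/eq_op /= eqn_add2l. Qed.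
Lemma E0X b : (E0 == XX b) = false. Proof. by rewrite [LHS]/eq_op /= add2n. Qed.
Lemma E1X b : (E1 == XX b) = false. Proof. by rewrite [LHS]/eq_op /= add2n. Qed.
Lemma XE0 b : (XX b == E0) = false. Proof. by rewrite [LHS]/eq_op /= add2n. Qed.
Lemma XE1 b : (XX b == E1) = false. Proof. by rewrite [LHS]/eq_op /= add2n. Qed.
Lemma E0E1 : (E0 == E1) = false. Proof. by []. Qed.
Lemma E1E0 : (E1 == E0) = false. Proof. by []. Qed.
Lemma j0j1 : (j0 == j1) = false. Proof. by []. Qed.
Lemma j1j0 : (j1 == j0) = false. Proof. by []. Qed.
End Idx.
Lemma o0l : (@ord0 1) = lshift 1 (@ord0 0). Proof. exact: val_inj. Qed.
Lemma o1r : (@ord_max 1) = rshift 1 (@ord0 0). Proof. exact: val_inj. Qed.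

Ltac bul1 := etransitivity; [first [apply: block_mxEul|apply: block_mxEur|apply: block_mxEdl|apply: block_mxEdr|apply: col_mxEu|apply: col_mxEd|apply: row_mxEl|apply: row_mxEr]|].
Ltac bul := bul1; rewrite ?o0l ?o1r; try bul1.

Ltac jtac b := rewrite mxE /= ?add2n ?add0n; case: b => [[|[|[|b]]] hb] //=; rewrite ?andbF ?andFb //; try reflexivity.

Section Entries.
Variable g : nat.
Local Notation m := ((g.+1).*2).
Local Notation N := ((g.+2).*2).
Variables (V : 'M[rat]_m) (x : rat) (r : 'cV[rat]_m).
Local Notation Rv := (row_enl V x r).
Local Notation Cv := (col_enl V x r).

Lemma RvE0 (c : 'I_N) : Rv (E0 g) c = 0.
Proof.
case: (split_ordP (c : 'I_(2 + m))) => [a ->|b ->]; rewrite /row_enl /E0; bul.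
  by rewrite mxE.
by rewrite ?mxE.
Qed.
Lemma RvE1E0 : Rv (E1 g) (E0 g) = 1. Proof. by rewrite /row_enl /E0 /E1; bul; rewrite mxE. Qed.
Lemma RvE1E1 : Rv (E1 g) (E1 g) = x. Proof. by rewrite /row_enl /E1; bul; rewrite mxE. Qed.
Lemma RvE1X b : Rv (E1 g) (XX b) = r b 0.
Proof. by rewrite /row_enl /E1 /XX; bul; rewrite ?mxE. Qed.
Lemma RvXE0 b : Rv (XX b) (E0 g) = 0.
Proof. by rewrite /row_enl /E0 /XX; bul; rewrite ?mxE. Qed.
Lemma RvXE1 b : Rv (XX b) (E1 g) = r b 0.
Proof. by rewrite /row_enl /E1 /XX; bul; rewrite ?mxE. Qed.
Lemma RvXX a b : Rv (XX a) (XX b) = V a b.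
Proof. by rewrite /row_enl /XX; bul. Qed.

Lemma CvE0 (c : 'I_N) : Cv c (E0 g) = 0.
Proof.
case: (split_ordP (c : 'I_(2 + m))) => [a ->|b ->]; rewrite /col_enl /E0; bul.
  by rewrite mxE; case: a => [[|[|]]].
by rewrite ?mxE.
Qed.
Lemma CvE0E1 : Cv (E0 g) (E1 g) = -1. Proof. by rewrite /col_enl /E0 /E1; bul; rewrite mxE. Qed.
Lemma CvE1E1 : Cv (E1 g) (E1 g) = x. Proof. by rewrite /col_enl /E1; bul; rewrite mxE. Qed.
Lemma CvE0X b : Cv (E0 g) (XX b) = 0.
Proof. by rewrite /col_enl /E0 /XX; bul; rewrite ?mxE. Qed.
Lemma CvE1X b : Cv (E1 g) (XX b) = r b 0.
Proof. by rewrite /col_enl /E1 /XX; bul; rewrite ?mxE. Qed.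
Lemma CvXE1 b : Cv (XX b) (E1 g) = r b 0.
Proof. by rewrite /col_enl /E1 /XX; bul; rewrite ?mxE. Qed.
Lemma CvXX a b : Cv (XX a) (XX b) = V a b.
Proof. by rewrite /col_enl /XX; bul. Qed.

Lemma JbE0E1 : Jmx g.+2 (E0 g) (E1 g) = -1. Proof. by rewrite mxE. Qed.
Lemma JbE1E0 : Jmx g.+2 (E1 g) (E0 g) = 1. Proof. by rewrite mxE. Qed.
Lemma JbE0E0 : Jmx g.+2 (E0 g) (E0 g) = 0. Proof. by rewrite mxE. Qed.
Lemma JbE1E1 : Jmx g.+2 (E1 g) (E1 g) = 0. Proof. by rewrite mxE. Qed.
Lemma JbE0X b : Jmx g.+2 (E0 g) (XX b) = 0. Proof. by rewrite mxE. Qed.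
Lemma JbE1X b : Jmx g.+2 (E1 g) (XX b) = 0. Proof. by rewrite mxE. Qed.
Lemma JbXE0 b : Jmx g.+2 (XX b) (E0 g) = 0.
Proof. jtac b. Qed.
Lemma JbXE1 b : Jmx g.+2 (XX b) (E1 g) = 0.
Proof. jtac b. Qed.
Lemma JbXX a b : Jmx g.+2 (XX a) (XX b) = Jmx g.+1 a b.
Proof. by rewrite !mxE /= ?add2n ?add0n !negbK !eqSS. Qed.

Lemma Jj0j1 : Jmx g.+1 (j0 g) (j1 g) = -1. Proof. by rewrite mxE. Qed.
Lemma Jj1j0 : Jmx g.+1 (j1 g) (j0 g) = 1. Proof. by rewrite mxE. Qed.
Lemma JXj0 b : gen b -> Jmx g.+1 b (j0 g) = 0.
Proof. rewrite /gen. jtac b. Qed.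
Lemma JXj1 b : gen b -> Jmx g.+1 b (j1 g) = 0.
Proof. rewrite /gen. jtac b. Qed.
Lemma Jj0j0 : Jmx g.+1 (j0 g) (j0 g) = 0. Proof. by rewrite mxE. Qed.
Lemma Jj1j1 : Jmx g.+1 (j1 g) (j1 g) = 0. Proof. by rewrite mxE. Qed.
Lemma Jj0X b : gen b -> Jmx g.+1 (j0 g) b = 0.
Proof. rewrite /gen. jtac b. Qed.
Lemma Jj1X b : gen b -> Jmx g.+1 (j1 g) b = 0.
Proof. rewrite /gen. jtac b. Qed.
End Entries.
Section CaseA.
Variable g : nat.
Local Notation m := ((g.+1).*2).
Local Notation N := ((g.+2).*2).
Variables (k : nat) (V : 'M[rat]_m).
Hypothesis hk : (0 < k)%N.
Hypothesis hV : seifert V.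
Local Notation kk := (k%:R : rat).

Lemma kk0 : kk != 0. Proof. by rewrite pnatr_eq0 -lt0n. Qed.

Lemma seifE a b : V a b = V b a + Jmx g.+1 a b.
Proof. by rewrite -hV !mxE; ring. Qed.
Lemma symV0 b : gen b -> V b (j0 g) = V (j0 g) b.
Proof. by move=> h; rewrite seifE JXj0 // addr0. Qed.
Lemma symV1 b : gen b -> V b (j1 g) = V (j1 g) b.
Proof. by move=> h; rewrite seifE JXj1 // addr0. Qed.
Lemma V10 : V (j1 g) (j0 g) = V (j0 g) (j1 g) + 1.
Proof. by rewrite seifE Jj1j0. Qed.

Definition evN (a : 'I_N) : 'rV[rat]_N := ev a.

Definition prowA (i : 'I_N) : 'rV[rat]_N :=
  match split (i : 'I_(2 + m)) with
  | inl a => if a == ord0 then evN (F1 g) - kk *: evN (E1 g) else - evN (F0 g)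
  | inr b => if b == j0 g then kk *: evN (F0 g) + evN (E0 g)
             else if b == j1 g then evN (E1 g) else evN (XX b)
  end.
Definition PA : 'M[rat]_N := \matrix_i prowA i.

Lemma rPA_E0 : row (E0 g) PA = evN (F1 g) - kk *: evN (E1 g).
Proof. by rewrite rowK /prowA /E0 (unsplitK (inl _ _)). Qed.
Lemma rPA_E1 : row (E1 g) PA = - evN (F0 g).
Proof. by rewrite rowK /prowA /E1 (unsplitK (inl _ _)). Qed.
Lemma rPA_F0 : row (F0 g) PA = kk *: evN (F0 g) + evN (E0 g).
Proof. by rewrite rowK /prowA /F0 /XX (unsplitK (inr _ _)) eqxx. Qed.
Lemma rPA_F1 : row (F1 g) PA = evN (E1 g).
Proof. by rewrite rowK /prowA /F1 /XX (unsplitK (inr _ _)). Qed.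
Lemma rPA_X b : gen b -> row (XX b) PA = evN (XX b).
Proof. by move=> /andP[h0 h1]; rewrite rowK /prowA /XX (unsplitK (inr _ _)) (negbTE h0) (negbTE h1). Qed.
End CaseA.
Section CaseA2.
Variable g : nat.
Local Notation m := ((g.+1).*2).
Local Notation N := ((g.+2).*2).
Variables (k : nat) (V : 'M[rat]_m).
Hypothesis hk : (0 < k)%N.
Hypothesis hV : seifert V.
Local Notation kk := (k%:R : rat).

Definition dd (n : rat) (a : 'I_m) : rat := Delta g.+1 n a a.
Lemma rowDelta n a : row a (Delta g.+1 n) = dd n a *: ev a.
Proof.
apply/rowP => c; rewrite /dd !mxE eqxx /=.
by case: eqVneq => [->|h]; rewrite ?mulr1 ?mulr0.
Qed.
Lemma Wab n a b : (Delta g.+1 n *m V *m (Delta g.+1 n)^T) a b = dd n a * (dd n b * V a b).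
Proof. by rewrite QE !rowDelta QZl QZr Qev. Qed.
Lemma dd0 n : dd n (j0 g) = n. Proof. by rewrite /dd mxE. Qed.
Lemma dd1 n : dd n (j1 g) = n^-1. Proof. by rewrite /dd mxE. Qed.
Lemma ddX n b : gen b -> dd n b = 1.
Proof. rewrite /gen /dd mxE eqxx. by case: b => [[|[|b]] hb]. Qed.

Definition xA : rat := V (j1 g) (j1 g) / (kk * kk).
Definition rhoA : 'cV[rat]_m := kk^-1 *: col (j1 g) V.
Lemma rhoAE b : rhoA b 0 = kk^-1 * V b (j1 g). Proof. by rewrite !mxE. Qed.
Definition VtA := row_enl V xA rhoA.
Definition WtA := PA g k *m VtA *m (PA g k)^T.
Definition WA := Delta g.+1 kk *m V *m (Delta g.+1 kk)^T.

Ltac rowsA := rewrite ?rPA_E0 ?rPA_E1 ?rPA_F0 ?rPA_F1;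
  repeat match goal with H : is_true (gen ?b) |- context [row (XX ?b) _] =>
    rewrite (rPA_X _ H) end.
Ltac symV := repeat match goal with H : is_true (gen ?b) |- _ =>
    progress rewrite ?(symV0 hV H) ?(symV1 hV H) ?(ddX _ H) end;
  rewrite ?(V10 hV) ?dd0 ?dd1.
Ltac qexp := rewrite /evN; do 3 rewrite ?QDl ?QDr ?QBl ?QBr ?QZl ?QZr ?QNl ?QNr; rewrite ?Qev /F0 /F1.
Ltac ents := rewrite ?RvE0 ?RvE1E0 ?RvE1E1 ?RvE1X ?RvXE0 ?RvXE1 ?RvXX
                    ?CvE0 ?CvE0E1 ?CvE1E1 ?CvE0X ?CvE1X ?CvXE1 ?CvXX.

Definition sigA : 'cV[rat]_m := \col_b WtA (E1 g) (XX b).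
Lemma sigAE b : sigA b 0 = WtA (E1 g) (XX b). Proof. by rewrite mxE. Qed.
Lemma enlA : WtA = col_enl WA (WtA (E1 g) (E1 g)) sigA.
Proof.
have k0 := kk0 hk.
apply/matrixP => i j.
case: (bigidxP i) => [->|->|->|->|b -> hb];
case: (bigidxP j) => [->|->|->|->|c -> hc]; rewrite /F0 /F1; ents; rewrite ?sigAE;
rewrite /WA ?Wab /WtA ?QE; rowsA; qexp; ents; rewrite /xA ?rhoAE; symV.
all: try ring. all: (field; exact: k0).
Qed.
End CaseA2.
Section CaseA3.
Variable g : nat.
Local Notation m := ((g.+1).*2).
Local Notation N := ((g.+2).*2).
Variable (k : nat).
Local Notation kk := (k%:R : rat).

Ltac rowsA := rewrite ?rPA_E0 ?rPA_E1 ?rPA_F0 ?rPA_F1;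
  repeat match goal with H : is_true (gen ?b) |- _ => progress rewrite ?(rPA_X _ H) end.
Ltac qexp := rewrite /evN; do 3 rewrite ?QDl ?QDr ?QBl ?QBr ?QZl ?QZr ?QNl ?QNr; rewrite ?Qev /F0 /F1.
Ltac intc := rewrite ?rpredN; repeat first [apply: rpredD|apply: rpredB|apply: rpredM|apply: natr_int|rewrite rpredN].

Lemma PA_int : integral_mx (PA g k).
Proof.
move=> i j.
have -> : PA g k i j = (row i (PA g k)) 0 j by rewrite [RHS]mxE.
rewrite entryQ.
case: (bigidxP i) => [->|->|->|->|b -> hb]; rowsA; qexp; rewrite ?mxE; intc.
Qed.

Ltac jents := rewrite ?JbE0E1 ?JbE1E0 ?JbE0E0 ?JbE1E1 ?JbE0X ?JbE1X ?JbXE0 ?JbXE1 ?JbXX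
  ?Jj0j1 ?Jj1j0 ?Jj0j0 ?Jj1j1;
  repeat match goal with H : is_true (gen ?b) |- _ =>
    progress rewrite ?(JXj0 H) ?(JXj1 H) ?(Jj0X H) ?(Jj1X H) end.

Lemma PA_sympl : symplectic (PA g k).
Proof.
apply/matrixP => i j.
case: (bigidxP i) => [->|->|->|->|b -> hb];
case: (bigidxP j) => [->|->|->|->|c -> hc]; rewrite /F0 /F1; jents;
rewrite QE; rowsA; qexp; jents.
all: try ring. Qed.

End CaseA3.
Section PolyHelp.
Variable n : nat.
Lemma LHSE (x y : 'rV[{poly rat}]_n) (N : nat) j : ('X^N *: (x - y)) 0 j = 'X^N * (x 0 j - y 0 j).
Proof. by rewrite !mxE. Qed.
Lemma xE (A : 'M[rat]_n) (a : nat) c j : ('X^a *: row c (map_mx polyC A^T)) 0 j = 'X^a * (A j c)%:P.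
Proof. by rewrite !mxE. Qed.
Lemma scaleE (a : {poly rat}) (M : 'rV[{poly rat}]_n) j : (a *: M) 0 j = a * M 0 j.
Proof. by rewrite mxE. Qed.
Lemma rowmapE (A : 'M[rat]_n) i b : (row i (map_mx polyC A^T)) 0 b = (A b i)%:P.
Proof. by rewrite !mxE. Qed.
Lemma QrowE (R : comNzRingType) (u : 'rV[R]_n) (M : 'M[R]_n) j : (u *m M) 0 j = Q M u (ev j).
Proof. by rewrite /Q /ev trmx_delta -colE [RHS]mxE. Qed.
Lemma alexTE (M : 'M[rat]_n) a b : (alex_rel M)^T a b = 'X * (M b a)%:P - (M a b)%:P.
Proof. by rewrite !mxE mulrC. Qed.
End PolyHelp.

Section RowMx.
Variable g : nat.
Local Notation m := ((g.+1).*2).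
Local Notation N := ((g.+2).*2).
Variable (R : nmodType).
Lemma ymxE0 (v : 'rV[R]_m) : (row_mx (0 : 'rV[R]_2) v : 'rV_N) 0 (E0 g) = 0.
Proof. rewrite /E0. by bul; rewrite mxE. Qed.
Lemma ymxE1 (v : 'rV[R]_m) : (row_mx (0 : 'rV[R]_2) v : 'rV_N) 0 (E1 g) = 0.
Proof. rewrite /E1. by bul; rewrite mxE. Qed.
Lemma ymxX (v : 'rV[R]_m) b : (row_mx (0 : 'rV[R]_2) v : 'rV_N) 0 (XX b) = v 0 b.
Proof. rewrite /XX. by bul. Qed.
End RowMx.

Section SmallIdx.
Variable g : nat.
Local Notation m := ((g.+1).*2).
Variant smallidx (i : 'I_m) : Type := I0 of i = j0 g | I1 of i = j1 g | IG of gen i.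
Lemma smallidxP i : smallidx i.
Proof.
case: (eqVneq i (j0 g)) => [->|h0]; first exact: I0.
case: (eqVneq i (j1 g)) => [->|h1]; first exact: I1.
by apply: IG; rewrite /gen h0 h1.
Qed.
Lemma gen0 b : gen b -> (b == j0 g) = false. Proof. by case/andP => /negbTE. Qed.
Lemma gen1 b : gen b -> (b == j1 g) = false. Proof. by case/andP => _ /negbTE. Qed.
Lemma gen0' b : gen b -> (j0 g == b) = false. Proof. by move=> h; rewrite eq_sym gen0. Qed.
Lemma gen1' b : gen b -> (j1 g == b) = false. Proof. by move=> h; rewrite eq_sym gen1. Qed.
Lemma DeltaE n a b : Delta g.+1 n a b = if a == b then dd n a else 0.
Proof. by rewrite /dd !mxE eqxx. Qed.
End SmallIdx.
Lemma id1E n (a b : 'I_n) : (1%:M : 'M[rat]_n) a b = (a == b)%:R. Proof. by rewrite mxE. Qed.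

Section TauA.
Variable g : nat.
Local Notation m := ((g.+1).*2).
Local Notation N := ((g.+2).*2).
Variables (k : nat) (V : 'M[rat]_m).
Hypothesis hk : (0 < k)%N.
Hypothesis hV : seifert V.
Local Notation kk := (k%:R : rat).

Ltac rowsA := rewrite ?rPA_E0 ?rPA_E1 ?rPA_F0 ?rPA_F1;
  repeat match goal with H : is_true (gen ?b) |- _ => progress rewrite ?(rPA_X _ H) end.
Ltac symV := repeat match goal with H : is_true (gen ?b) |- _ =>
    progress rewrite ?(symV0 hV H) ?(symV1 hV H) ?(ddX _ H) end;
  rewrite ?(V10 hV) ?dd0 ?dd1.
Ltac qexp := rewrite /evN; do 3 rewrite ?QDl ?QDr ?QBl ?QBr ?QZl ?QZr ?QNl ?QNr; rewrite ?Qev /F0 /F1.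
Ltac ents := rewrite ?RvE0 ?RvE1E0 ?RvE1E1 ?RvE1X ?RvXE0 ?RvXE1 ?RvXX
                    ?CvE0 ?CvE0E1 ?CvE1E1 ?CvE0X ?CvE1X ?CvXE1 ?CvXX.
Ltac eqs := rewrite ?XXeq ?E0X ?E1X ?XE0 ?XE1 ?E0E1 ?E1E0 ?j0j1 ?j1j0 ?eqxx;
  repeat match goal with H : is_true (gen ?b) |- _ =>
    progress rewrite ?(gen0 H) ?(gen1 H) ?(gen0' H) ?(gen1' H) end.

Lemma PAE a b : PA g k a b = Q 1%:M (row a (PA g k)) (ev b).
Proof. by rewrite -entryQ [RHS]mxE. Qed.

Ltac finish k0 := rewrite /= ?mulr0n ?mulr1n;
  apply/polyP; case => [|[|?]]; rewrite !(coefD, coefB, coefN, coefXM, coefCM, coefC, expr1, expr0, mul1r) /=; [ try ring; try (field; exact: k0) ..].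

Local Notation LHSx i := ('X^0 *: row (XX i) (map_mx polyC (PA g k)^T)).
Local Notation LHSy i := ('X^0 *: (row_mx (0 : 'rV[{poly rat}]_2) (row i (map_mx polyC (Delta g.+1 kk)^T)) : 'rV_N)).

Lemma tauA0 : alex_eq (WtA k V) (LHSx (j0 g)) (LHSy (j0 g)).
Proof.
have k0 := kk0 hk.
exists 0%N, (- ev (E0 g)).
apply/rowP => j.
rewrite LHSE xE scaleE QrowE QNl Qev alexTE.
case: (bigidxP j) => [->|->|->|->|b -> hb];
  rewrite ?ymxE0 ?ymxE1 ?ymxX ?rowmapE ?DeltaE PAE; rowsA; qexp; rewrite ?id1E; eqs;
  rewrite /WtA ?QE; rowsA; qexp; ents; rewrite /xA ?rhoAE; symV; finish k0.
Qed.

Lemma tauA1 : alex_eq (WtA k V) (LHSx (j1 g)) (LHSy (j1 g)).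
Proof.
have k0 := kk0 hk.
exists 1%N, (- ev (E1 g) - (kk^-1)%:P *: ev (F0 g)).
apply/rowP => j.
rewrite LHSE xE scaleE QrowE; qexp; rewrite !alexTE.
case: (bigidxP j) => [->|->|->|->|b -> hb];
  rewrite ?ymxE0 ?ymxE1 ?ymxX ?rowmapE ?DeltaE PAE; rowsA; qexp; rewrite ?id1E; eqs;
  rewrite /WtA ?QE; rowsA; qexp; ents; rewrite /xA ?rhoAE; symV; finish k0.
Qed.

Lemma tauAG i : gen i -> alex_eq (WtA k V) (LHSx i) (LHSy i).
Proof.
move=> hi.
exists 0%N, 0.
apply/rowP => j.
rewrite LHSE xE scaleE mul0mx.
have -> : (0 : 'rV[{poly rat}]_N) 0 j = 0 by rewrite mxE.
case: (bigidxP j) => [->|->|->|->|b -> hb];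
  rewrite ?ymxE0 ?ymxE1 ?ymxX ?rowmapE ?DeltaE PAE; rowsA; qexp; rewrite ?id1E; eqs; symV.
all: try by rewrite !(mulr0, mul1r, subrr, subr0, rmorph0).
by case: (eqVneq b i) => _; rewrite /= ?mulr1n ?mulr0n !expr0 !mul1r subrr.
Qed.

Lemma tauA i : alex_eq (WtA k V) (LHSx i) (LHSy i).
Proof.
case: (smallidxP i) => [->|->|hi]; [exact: tauA0 | exact: tauA1 | exact: tauAG].
Qed.
End TauA.
Section CaseB.
Variable g : nat.
Local Notation m := ((g.+1).*2).
Local Notation N := ((g.+2).*2).
Variables (k : nat).
Local Notation kk := (k%:R : rat).

Definition prowB (i : 'I_N) : 'rV[rat]_N :=
  match split (i : 'I_(2 + m)) with
  | inl a => if a == ord0 then evN (F0 g) - kk *: evN (E1 g) else evN (F1 g)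
  | inr b => if b == j0 g then evN (E1 g)
             else if b == j1 g then kk *: evN (F1 g) - evN (E0 g) else evN (XX b)
  end.
Definition PB : 'M[rat]_N := \matrix_i prowB i.

Lemma rPB_E0 : row (E0 g) PB = evN (F0 g) - kk *: evN (E1 g).
Proof. by rewrite rowK /prowB /E0 (unsplitK (inl _ _)). Qed.
Lemma rPB_E1 : row (E1 g) PB = evN (F1 g).
Proof. by rewrite rowK /prowB /E1 (unsplitK (inl _ _)). Qed.
Lemma rPB_F0 : row (F0 g) PB = evN (E1 g).
Proof. by rewrite rowK /prowB /F0 /XX (unsplitK (inr _ _)) eqxx. Qed.
Lemma rPB_F1 : row (F1 g) PB = kk *: evN (F1 g) - evN (E0 g).
Proof. by rewrite rowK /prowB /F1 /XX (unsplitK (inr _ _)). Qed.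
Lemma rPB_X b : gen b -> row (XX b) PB = evN (XX b).
Proof. by move=> /andP[h0 h1]; rewrite rowK /prowB /XX (unsplitK (inr _ _)) (negbTE h0) (negbTE h1). Qed.

Ltac rowsB := rewrite ?rPB_E0 ?rPB_E1 ?rPB_F0 ?rPB_F1;
  repeat match goal with H : is_true (gen ?b) |- _ => progress rewrite ?(rPB_X H) end.
Ltac qexp := rewrite /evN; do 3 rewrite ?QDl ?QDr ?QBl ?QBr ?QZl ?QZr ?QNl ?QNr; rewrite ?Qev /F0 /F1.
Ltac intc := rewrite ?rpredN; repeat first [apply: rpredD|apply: rpredB|apply: rpredM|apply: natr_int|rewrite rpredN].
Ltac jents := rewrite ?JbE0E1 ?JbE1E0 ?JbE0E0 ?JbE1E1 ?JbE0X ?JbE1X ?JbXE0 ?JbXE1 ?JbXX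
  ?Jj0j1 ?Jj1j0 ?Jj0j0 ?Jj1j1;
  repeat match goal with H : is_true (gen ?b) |- _ =>
    progress rewrite ?(JXj0 H) ?(JXj1 H) ?(Jj0X H) ?(Jj1X H) end.

Lemma PB_int : integral_mx PB.
Proof.
move=> i j.
have -> : PB i j = (row i PB) 0 j by rewrite [RHS]mxE.
rewrite entryQ.
case: (bigidxP i) => [->|->|->|->|b -> hb]; rowsB; qexp; rewrite ?mxE; intc.
Qed.

Lemma PB_sympl : symplectic PB.
Proof.
apply/matrixP => i j.
case: (bigidxP i) => [->|->|->|->|b -> hb];
case: (bigidxP j) => [->|->|->|->|c -> hc]; rewrite /F0 /F1; jents;
rewrite QE; rowsB; qexp; jents.
all: try ring.
Qed.
End CaseB.

Section CaseB2.
Variable g : nat.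
Local Notation m := ((g.+1).*2).
Local Notation N := ((g.+2).*2).
Variables (k : nat) (V : 'M[rat]_m).
Hypothesis hk : (0 < k)%N.
Hypothesis hV : seifert V.
Local Notation kk := (k%:R : rat).

Definition xB : rat := V (j0 g) (j0 g) / (kk * kk).
Definition rhoB : 'cV[rat]_m := kk^-1 *: col (j0 g) V.
Lemma rhoBE b : rhoB b 0 = kk^-1 * V b (j0 g). Proof. by rewrite !mxE. Qed.
Definition VtB := row_enl V xB rhoB.
Definition WtB := PB g k *m VtB *m (PB g k)^T.
Definition WB := Delta g.+1 kk^-1 *m V *m (Delta g.+1 kk^-1)^T.

Ltac rowsB := rewrite ?rPB_E0 ?rPB_E1 ?rPB_F0 ?rPB_F1;
  repeat match goal with H : is_true (gen ?b) |- _ => progress rewrite ?(rPB_X _ H) end.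
Ltac symV := repeat match goal with H : is_true (gen ?b) |- _ =>
    progress rewrite ?(symV0 hV H) ?(symV1 hV H) ?(ddX _ H) end;
  rewrite ?(V10 hV) ?dd0 ?dd1 ?invrK.
Ltac qexp := rewrite /evN; do 3 rewrite ?QDl ?QDr ?QBl ?QBr ?QZl ?QZr ?QNl ?QNr; rewrite ?Qev /F0 /F1.
Ltac ents := rewrite ?RvE0 ?RvE1E0 ?RvE1E1 ?RvE1X ?RvXE0 ?RvXE1 ?RvXX
                    ?CvE0 ?CvE0E1 ?CvE1E1 ?CvE0X ?CvE1X ?CvXE1 ?CvXX.
Ltac eqs := rewrite ?XXeq ?E0X ?E1X ?XE0 ?XE1 ?E0E1 ?E1E0 ?j0j1 ?j1j0 ?eqxx;
  repeat match goal with H : is_true (gen ?b) |- _ =>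
    progress rewrite ?(gen0 H) ?(gen1 H) ?(gen0' H) ?(gen1' H) end.

Definition sigB : 'cV[rat]_m := \col_b WtB (E1 g) (XX b).
Lemma sigBE b : sigB b 0 = WtB (E1 g) (XX b). Proof. by rewrite mxE. Qed.
Lemma enlB : WtB = col_enl WB (WtB (E1 g) (E1 g)) sigB.
Proof.
have k0 := kk0 hk.
apply/matrixP => i j.
case: (bigidxP i) => [->|->|->|->|b -> hb];
case: (bigidxP j) => [->|->|->|->|c -> hc]; rewrite /F0 /F1; ents; rewrite ?sigBE;
rewrite /WB ?Wab /WtB ?QE; rowsB; qexp; ents; rewrite /xB ?rhoBE; symV.
all: try ring. all: try (field; exact: k0).
Qed.

Lemma PBE a b : PB g k a b = Q 1%:M (row a (PB g k)) (ev b).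
Proof. by rewrite -entryQ [RHS]mxE. Qed.

Ltac finish k0 := rewrite /= ?mulr0n ?mulr1n;
  apply/polyP; case => [|[|?]]; rewrite !(coefD, coefB, coefN, coefXM, coefCM, coefC, expr1, expr0, mul1r) /=; [ try ring; try (field; exact: k0) ..].

Local Notation LHSx i := ('X^0 *: row (XX i) (map_mx polyC (PB g k)^T)).
Local Notation LHSy i := ('X^0 *: (row_mx (0 : 'rV[{poly rat}]_2) (row i (map_mx polyC (Delta g.+1 kk^-1)^T)) : 'rV_N)).

Lemma tauB0 : alex_eq (WtB) (LHSx (j0 g)) (LHSy (j0 g)).
Proof.
have k0 := kk0 hk.
exists 1%N, (- ev (E1 g) + (kk^-1)%:P *: ev (F1 g)).
apply/rowP => j.
rewrite LHSE xE scaleE QrowE; qexp; rewrite !alexTE.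
case: (bigidxP j) => [->|->|->|->|b -> hb];
  rewrite ?ymxE0 ?ymxE1 ?ymxX ?rowmapE ?DeltaE PBE; rowsB; qexp; rewrite ?id1E; eqs;
  rewrite /WtB ?QE; rowsB; qexp; ents; rewrite /xB ?rhoBE; symV; finish k0.
Qed.

Lemma tauB1 : alex_eq (WtB) (LHSx (j1 g)) (LHSy (j1 g)).
Proof.
have k0 := kk0 hk.
exists 0%N, (ev (E0 g)).
apply/rowP => j.
rewrite LHSE xE scaleE QrowE Qev alexTE.
case: (bigidxP j) => [->|->|->|->|b -> hb];
  rewrite ?ymxE0 ?ymxE1 ?ymxX ?rowmapE ?DeltaE PBE; rowsB; qexp; rewrite ?id1E; eqs;
  rewrite /WtB ?QE; rowsB; qexp; ents; rewrite /xB ?rhoBE; symV; finish k0.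
Qed.

Lemma tauBG i : gen i -> alex_eq (WtB) (LHSx i) (LHSy i).
Proof.
move=> hi.
exists 0%N, 0.
apply/rowP => j.
rewrite LHSE xE scaleE mul0mx.
have -> : (0 : 'rV[{poly rat}]_N) 0 j = 0 by rewrite mxE.
case: (bigidxP j) => [->|->|->|->|b -> hb];
  rewrite ?ymxE0 ?ymxE1 ?ymxX ?rowmapE ?DeltaE PBE; rowsB; qexp; rewrite ?id1E; eqs; symV.
all: try by rewrite !(mulr0, mul1r, subrr, subr0, rmorph0).
by case: (eqVneq b i) => _; rewrite /= ?mulr1n ?mulr0n !expr0 !mul1r subrr.
Qed.

Lemma tauB i : alex_eq (WtB) (LHSx i) (LHSy i).
Proof.
case: (smallidxP i) => [->|->|hi]; [exact: tauB0 | exact: tauB1 | exact: tauBG].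
Qed.
End CaseB2.
Theorem mainTheorem14 (g : nat) (n : rat) (V W : 'M[rat]_(g.*2)) :
  (0 < g)%N ->
  (exists k : nat, (0 < k)%N /\ (n = k%:R \/ n = (k%:R)^-1)) ->
  seifert V -> seifert W ->
  W = Delta g n *m V *m (Delta g n)^T ->
  exists (Vt Wt P : 'M[rat]_((g.+1).*2)),
    [/\ enlargement V Vt, enlargement W Wt,
        integral_mx P, symplectic P & Wt = P *m Vt *m P^T] /\
    exists a b : nat, forall i : 'I_(g.*2),
      alex_eq Wt
        ('X^a *: row (rshift 2 i) (map_mx polyC P^T))
        ('X^b *: row_mx (0 : 'rV[{poly rat}]_2) (row i (map_mx polyC (Delta g n)^T))).
Proof.
case: g V W => [|g] V W //= _ [k [hk hn]] hV _ hW.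
case: hn => hn; subst n.
  exists (VtA k V), (WtA k V), (PA g k); split.
    split.
    - by exists (xA k V), (rhoA k V); left.
    - exists (WtA k V (E1 g) (E1 g)), (sigA k V); right; rewrite hW; exact: enlA.
    - exact: PA_int.
    - exact: PA_sympl.
    - by [].
  by exists 0%N, 0%N => i; exact: tauA.
exists (VtB k V), (WtB k V), (PB g k); split.
  split.
  - by exists (xB k V), (rhoB k V); left.
  - exists (WtB k V (E1 g) (E1 g)), (sigB k V); right; rewrite hW; exact: enlB.
  - exact: PB_int.
  - exact: PB_sympl.
  - by [].
by exists 0%N, 0%N => i; exact: tauB.
Qed.
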